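(* Let $R$ be a ring, let $N\ge0$ and $0\le n\le N$, and let $\mathfrak{J}$ be a set of subsets of $[0,N]=\{0,1,\dots,N\}$. In $R[X_1,\dots,X_N]$ put $X_0:=1-X_1-\cdots-X_N$. Then \[(X_{n+1},\dots,X_N)+\bigcap_{J\in\mathfrak{J}}(X_i)_{i\in J}=\bigcap_{J\in\mathfrak{J}}\Big((X_i)_{i\in J}+(X_{n+1},\dots,X_N)\Big).\] *)

(* Defs.v *)
From HB Require Import structures.
From mathcomp Require Import all_boot all_order all_algebra.
From mathcomp Require Import mpoly.
Set Implicit Arguments. Unset Strict Implicit. Unset Printing Implicit Defensive.
Import GRing.Theory.
Local Open Scope ring_scope.

(* Variables X_0, ..., X_N of R[X_1,...,X_N], indexed by 'I_(N.+1):
   X_0 := 1 - X_1 - ... - X_N, and X_i (i >= 1) is the mpoly variable 'X_(i-1). *)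
Definition bvar (R : comNzRingType) (N : nat) (i : 'I_N.+1) : {mpoly R[N]} :=
  match unlift ord0 i with
  | None => 1 - \sum_(j < N) 'X_j
  | Some j => 'X_j
  end.

Definition ideal_gen (T : comNzRingType) (I : finType) (P : pred I) (g : I -> T)
  : T -> Prop :=
  fun p => exists c : I -> T, p = \sum_(i | P i) c i * g i.

Definition ideal_add (T : comNzRingType) (A B : T -> Prop) : T -> Prop :=
  fun p => exists a b, A a /\ B b /\ p = a + b.

(* Intersection of a family of ideals indexed by a finite set of indices
   (empty intersection = the whole ring). *)
Definition ideal_bigcap (T : comNzRingType) (K : finType) (F : {set K})
  (A : K -> T -> Prop) : T -> Prop :=
  fun p => forall k, k \in F -> A k p.

(* Main.v *)
Require Import Defs.
From HB Require Import structures.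
From mathcomp Require Import all_boot all_order all_algebra.
From mathcomp Require Import mpoly.
From mathcomp Require Import ring.
From Stdlib Require Import IndefiniteDescription.
Set Implicit Arguments. Unset Strict Implicit. Unset Printing Implicit Defensive.
Import GRing.Theory.
Local Open Scope ring_scope.
Section I.
Variables (T : comNzRingType) (I : finType) (P : pred I) (g : I -> T).
Local Notation G := (ideal_gen P g).
Lemma ig0 : G 0.
Proof. by exists (fun _ => 0); rewrite big1 // => i _; rewrite mul0r. Qed.
Lemma igD a b : G a -> G b -> G (a + b).
Proof.
move=> [c ->] [c' ->]; exists (fun i => c i + c' i).
by rewrite -big_split; apply: eq_bigr => i _; rewrite mulrDl.
Qed.
Lemma igN a : G a -> G (- a).
Proof.
move=> [c ->]; exists (fun i => - c i).
by rewrite -sumrN; apply: eq_bigr => i _; rewrite mulNr.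
Qed.
Lemma igB a b : G a -> G b -> G (a - b).
Proof. by move=> ha hb; apply: igD => //; apply: igN. Qed.
Lemma igM r a : G a -> G (r * a).
Proof.
move=> [c ->]; exists (fun i => r * c i).
by rewrite mulr_sumr; apply: eq_bigr => i _; rewrite mulrA.
Qed.
Lemma iggen i : P i -> G (g i).
Proof.
move=> hi; exists (fun k => if k == i then 1 else 0).
rewrite (bigD1 i) //= eqxx mul1r big1 ?addr0 // => k /andP [_ /negbTE ->].
by rewrite mul0r.
Qed.
Lemma igsum (J : finType) (Q : pred J) (F : J -> T) :
  (forall j, Q j -> G (F j)) -> G (\sum_(j | Q j) F j).
Proof.
move=> h; apply: (big_ind G) => //; [exact: ig0 | exact: igD].
Qed.
End I.

Section S.
Variables (R : comNzRingType) (N n : nat).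
Local Notation A := {mpoly R[N]}.
Definition cst : {rmorphism R -> {poly A}} := (polyC \o (@mpolyC N R))%FUN.
Definition hh (j : 'I_N) : {poly A} := if (j < n)%N then ('X_j)%:P * 'X else 0.
Definition eta (p : A) : {poly A} := mmap cst hh p.
Lemma etaM p q : eta (p * q) = eta p * eta q.
Proof. by rewrite /eta rmorphM. Qed.
Lemma etaD p q : eta (p + q) = eta p + eta q.
Proof. by rewrite /eta mmapD. Qed.
Lemma etaB p q : eta (p - q) = eta p - eta q.
Proof. by rewrite /eta mmapB. Qed.
Lemma eta0 : eta 0 = 0.
Proof. by rewrite /eta mmap0. Qed.
Lemma etaX j : eta 'X_j = hh j.
Proof. by rewrite /eta mmapX mmap1U. Qed.
Lemma etaC c : eta c%:MP = (c%:MP)%:P.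
Proof. by rewrite /eta mmapC. Qed.

Definition sS : A := 1 - \sum_(j < N | (n <= j)%N) 'X_j.
Definition Psi (d : nat) (p : A) : A := \sum_(k < d.+1) (eta p)`_k * sS ^+ (d - k).

Lemma PsiD d p q : Psi d (p + q) = Psi d p + Psi d q.
Proof. by rewrite /Psi -big_split /=; apply: eq_bigr => k _; rewrite etaD coefD mulrDl. Qed.
Lemma Psi0 d : Psi d 0 = 0.
Proof. by rewrite /Psi big1 // => k _; rewrite eta0 coef0 mul0r. Qed.
Lemma PsiB d p q : Psi d (p - q) = Psi d p - Psi d q.
Proof. by rewrite /Psi -sumrB; apply: eq_bigr => k _; rewrite etaB coefB mulrBl. Qed.
Lemma Psi_sum d (I : finType) (P : pred I) (F : I -> A) :
  Psi d (\sum_(i | P i) F i) = \sum_(i | P i) Psi d (F i).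
Proof. by apply: (big_morph (Psi d)); [exact: PsiD | exact: Psi0]. Qed.

Lemma Psi_kept d c (j : 'I_N) : (j < n)%N -> Psi d.+1 (c * 'X_j) = 'X_j * Psi d c.
Proof.
move=> hj; rewrite /Psi big_ord_recl etaM etaX /hh hj mulrA coefMX /= mul0r add0r.
rewrite mulr_sumr; apply: eq_bigr => k _.
rewrite coefMX /= coefMC add0n. have -> : (d.+1 - bump 0 k = d - k)%N by rewrite /bump leq0n add1n subSS. by rewrite [_ * 'X_j]mulrC mulrA.
Qed.
Lemma Psi_tail d c (j : 'I_N) : (n <= j)%N -> Psi d (c * 'X_j) = 0.
Proof.
move=> hj; rewrite /Psi big1 // => k _.
by rewrite etaM etaX /hh ltnNge hj mulr0 coef0 mul0r.
Qed.
Lemma Psi_step d c : (size (eta c) <= d.+1)%N -> Psi d.+1 c = sS * Psi d c.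
Proof.
move=> hs; rewrite /Psi big_ord_recr /= [(eta c)`_d.+1]nth_default // mul0r addr0 mulr_sumr.
apply: eq_bigr => k _ /=; rewrite subSn; last by rewrite -ltnS.
by rewrite exprS mulrCA.
Qed.
Lemma bvar0 : @bvar R N ord0 = 1 - \sum_(j < N) 'X_j.
Proof. by rewrite /bvar unlift_none. Qed.
Lemma bvarS (j : 'I_N) : @bvar R N (lift ord0 j) = 'X_j.
Proof. by rewrite /bvar liftK. Qed.

Lemma sS_split : sS - \sum_(j < N | (j < n)%N) 'X_j = 1 - \sum_(j < N) 'X_j.
Proof.
rewrite /sS [in RHS](bigID (fun j : 'I_N => (j < n)%N) predT) /=.
have -> : \sum_(i < N | ~~ (i < n)%N) 'X_i = \sum_(j < N | (n <= j)%N) ('X_j : A).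
  by apply: eq_bigl => j; rewrite -leqNgt.
ring.
Qed.

Lemma Psi_X0 d c : (size (eta c) <= d.+1)%N ->
  Psi d.+1 (c * @bvar R N ord0) = @bvar R N ord0 * Psi d c.
Proof.
move=> hs; rewrite bvar0 mulrBr mulr1 mulr_sumr PsiB Psi_sum Psi_step //.
rewrite (bigID (fun j : 'I_N => (j < n)%N) predT) /=.
rewrite [X in _ - (_ + X)]big1; last first.
  by move=> j hj; apply: Psi_tail; rewrite leqNgt.
rewrite addr0 (eq_bigr (fun j : 'I_N => 'X_j * Psi d c)); last first.
  by move=> j hj; rewrite Psi_kept.
by rewrite -mulr_suml -mulrBl sS_split.
Qed.

Lemma Psi_bvar_tail d c (i : 'I_N.+1) : (n < i)%N -> Psi d (c * @bvar R N i) = 0.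
Proof.
case: (unliftP ord0 i) => [j ->|->] //.
by rewrite lift0 ltnS bvarS => h; apply: Psi_tail.
Qed.

Lemma Psi_bvar_kept d c (i : 'I_N.+1) : ~~ (n < i)%N -> (size (eta c) <= d.+1)%N ->
  Psi d.+1 (c * @bvar R N i) = Psi d c * @bvar R N i.
Proof.
case: (unliftP ord0 i) => [j ->|->] h hs.
  have hj : (j < n)%N by move: h; rewrite lift0 ltnS -ltnNge.
  by rewrite bvarS Psi_kept // mulrC.
by rewrite Psi_X0 // mulrC.
Qed.

Local Notation Tl := (ideal_gen (fun i : 'I_N.+1 => (n < i)%N) (@bvar R N)).
Lemma TlX (j : 'I_N) : (n <= j)%N -> Tl 'X_j.
Proof. by move=> h; rewrite -bvarS; apply: iggen; rewrite lift0 ltnS. Qed.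
Lemma TlS : Tl (sS - 1).
Proof.
rewrite /sS addrAC subrr add0r; apply: igN; apply: igsum => j; exact: TlX.
Qed.
Lemma TlSX m : Tl (sS ^+ m - 1).
Proof.
elim: m => [|m ih]; first by rewrite expr0 subrr; exact: ig0.
have -> : sS ^+ m.+1 - 1 = sS * (sS ^+ m - 1) + (sS - 1) by rewrite exprS; ring.
by apply: igD; [apply: igM | apply: TlS].
Qed.

Definition phi (p : A) : A := (eta p).[1].
Lemma phiX j : phi 'X_j = if (j < n)%N then 'X_j else 0.
Proof. by rewrite /phi etaX /hh; case: ifP => _; rewrite ?horner0 // hornerMX hornerC mulr1. Qed.
Lemma phiC c : phi c%:MP = c%:MP.
Proof. by rewrite /phi etaC hornerC. Qed.
Lemma phiM p q : phi (p * q) = phi p * phi q.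
Proof. by rewrite /phi etaM hornerM. Qed.
Lemma phiD p q : phi (p + q) = phi p + phi q.
Proof. by rewrite /phi etaD hornerD. Qed.

Definition Good (p : A) := Tl (p - phi p).
Lemma GoodD p q : Good p -> Good q -> Good (p + q).
Proof.
rewrite /Good phiD => hp hq.
have -> : p + q - (phi p + phi q) = (p - phi p) + (q - phi q) by rewrite opprD addrACA.
exact: igD.
Qed.
Lemma GoodM p q : Good p -> Good q -> Good (p * q).
Proof.
rewrite /Good phiM => hp hq.
have -> : p * q - phi p * phi q = q * (p - phi p) + phi p * (q - phi q)
  by rewrite !mulrBr [q * p]mulrC [q * phi p]mulrC addrA subrK.
by apply: igD; apply: igM.
Qed.
Lemma GoodC c : Good c%:MP.
Proof. by rewrite /Good phiC subrr; exact: ig0. Qed.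
Lemma GoodX j : Good 'X_j.
Proof.
rewrite /Good phiX; case: ifP => h; first by rewrite subrr; exact: ig0.
by rewrite subr0; apply: TlX; rewrite leqNgt h.
Qed.
Lemma Good0 : Good 0.
Proof. by rewrite /Good /phi eta0 horner0 subrr; exact: ig0. Qed.
Lemma Good1 : Good 1.
Proof. by have := GoodC 1; rewrite mpolyC1. Qed.
Lemma GoodXm m : Good 'X_[m].
Proof.
rewrite mpolyXE_id; apply: (big_ind Good); [exact: Good1 | exact: GoodM | ].
move=> i _; elim: (m i) => [|k ih]; first by rewrite expr0; exact: Good1.
rewrite exprS; apply: GoodM; [exact: GoodX | exact: ih].
Qed.
Lemma Good_all p : Good p.
Proof.
have H : forall m, Good (p@_m *: 'X_[m]).
  by move=> m; rewrite -mul_mpolyC; apply: GoodM; [exact: GoodC | exact: GoodXm].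
have -> : p = \sum_(m <- msupp p) p@_m *: 'X_[m] by exact: mpolyE.
apply: (big_ind Good); [exact: Good0 | exact: GoodD | ].
move=> m _; exact: H.
Qed.

Lemma Psi_good d p : (size (eta p) <= d.+1)%N -> Tl (p - Psi d p).
Proof.
move=> hs.
have -> : p - Psi d p = (p - phi p) - (Psi d p - phi p) by rewrite opprB addrA subrK.
apply: igB; first exact: Good_all.
rewrite /phi (horner_coef_wide _ hs) /Psi -sumrB; apply: igsum => k _.
by rewrite expr1n mulr1 -{2}(mulr1 (eta p)`_k) -mulrBr; apply: igM; exact: TlSX.
Qed.
End S.

Lemma key (R : comNzRingType) (N n D : nat) (k : {set 'I_N.+1})
  (C e : 'I_N.+1 -> {mpoly R[N]}) (p : {mpoly R[N]}) :
  (forall i, (size (eta n (C i)) <= D)%N) ->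
  p = \sum_(i | i \in k) C i * @bvar R N i
      + \sum_(i : 'I_N.+1 | (n < i)%N) e i * @bvar R N i ->
  ideal_gen (fun i => i \in k) (@bvar R N) (Psi n D.+1 p).
Proof.
move=> hD hp.
exists (fun i : 'I_N.+1 => if (n < i)%N then 0 else Psi n D (C i)).
rewrite {1}hp PsiD !Psi_sum [X in _ + X]big1; last first.
  move=> i hi; exact: Psi_bvar_tail.
rewrite addr0; apply: eq_bigr => i _; case: ifP => h.
  by rewrite Psi_bvar_tail ?h // mul0r.
rewrite Psi_bvar_kept ?h //; exact: leqW.
Qed.

Theorem lemma2p30 (R : comNzRingType) (N n : nat) (hn : (n <= N)%N)
  (JJ : {set {set 'I_N.+1}}) :
  let Xtail := ideal_gen (fun i : 'I_N.+1 => (n < i)%N) (@bvar R N) in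
  let XJ := fun J : {set 'I_N.+1} => ideal_gen (fun i => i \in J) (@bvar R N) in
  forall p : {mpoly R[N]},
    ideal_add Xtail (ideal_bigcap JJ XJ) p <->
    ideal_bigcap JJ (fun J => ideal_add (XJ J) Xtail) p.
Proof.
move=> Xtail XJ p; split.
  move=> [a [b [Ha [Hb ->]]]] k Hk.
  exists b, a; split; first exact: Hb k Hk.
  by split; [exact: Ha | exact: addrC].
move=> H.
have Hc : forall k : {set 'I_N.+1}, exists c : 'I_N.+1 -> {mpoly R[N]},
    k \in JJ -> Xtail (p - \sum_(i | i \in k) c i * @bvar R N i).
  move=> k; case: (boolP (k \in JJ)) => hk; last by exists (fun _ => 0).
  have [a [b [[c ->] [hb ->]]]] := H k hk.
  by exists c => _; rewrite [_ + b]addrC addrK.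
have [C HC] : exists C : {set 'I_N.+1} -> 'I_N.+1 -> {mpoly R[N]},
    forall k, k \in JJ -> Xtail (p - \sum_(i | i \in k) C k i * @bvar R N i).
  exists (fun k => proj1_sig (constructive_indefinite_description _ (Hc k))).
  by move=> k; exact: (proj2_sig (constructive_indefinite_description _ (Hc k))).
have [D [hDp hD]] : exists D, (size (eta n p) <= D)%N /\
    forall k i, (size (eta n (C k i)) <= D)%N.
  exists (\sum_(k : {set 'I_N.+1}) \sum_(i : 'I_N.+1) size (eta n (C k i)) + size (eta n p))%N.
  split; first by rewrite leq_addl.
  move=> k i; rewrite (leq_trans _ (leq_addr _ _)) //.
  rewrite (bigD1 k) //= (leq_trans _ (leq_addr _ _)) //.
  by rewrite (bigD1 i) //= leq_addr.
exists (p - Psi n D.+1 p), (Psi n D.+1 p); split.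
  by apply: Psi_good; rewrite (leq_trans hDp) // leqW.
split; last by rewrite subrK.
move=> k hk; have [e he] := HC k hk.
apply: (@key R N n D k (C k) e p (hD k)).
by rewrite -he addrC subrK.
Qed.
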